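(* Let $f$ be a generalized polynomial and let $D$ be a nonconstant complex polynomial. For each $a\in\mathbb{C}$ let $\mu_a$ be the multiplicity of $a$ as a root of $D$. Then there is a unique pair $(q,R)$ such that $q$ is a generalized polynomial, $R$ is a complex polynomial of degree $<\deg D$, and $f=D\,q+R$. Moreover $R$ is given by the Taylor–Gauss Formula $$R(X)=\sum_{D(a)=0}\ J_a^{\mu_a-1}\!\left(f(X)\,\frac{(X-a)^{\mu_a}}{D(X)}\right)\frac{D(X)}{(X-a)^{\mu_a}}.$$
   Context: For $a\in\mathbb{C}$, a Laurent series in $X-a$ is a formal sum $\sum_{n\in\mathbb{Z}} f_{a,n}(X-a)^n$ with complex coefficients, only finitely many nonzero coefficients of negative index; these form a field $\mathbb{C}((X-a))$. A generalized rational fraction is a family $f=(f_a)_{a\in\mathbb{C}}$ with $f_a\in\mathbb{C}((X-a))$; such families are added, multiplied and differentiated componentwise. A complex polynomial $P$ is identified with the family $\big(\sum_{n\ge0}\frac{P^{(n)}(a)}{n!}(X-a)^n\big)_{a\in\mathbb{C}}$ of its Taylor expansions; a nonzero polynomial is invertible in this ring, so $f/D$ makes sense. A generalized polynomial is a generalized rational fraction $f$ with $f_a\in\mathbb{C}[[X-a]]$ for all $a$ (''$f$ is defined at every point''). For a generalized rational fraction $f$, $a\in\mathbb{C}$ and $k\in\mathbb{Z}$, $J_a^{k}(f):=\sum_{n\le k} f_{a,n}(X-a)^n$ (the order-$k$ expansion of $f$ at $a$); when $f$ is defined at $a$ and $k\ge 0$ this is a polynomial of degree $\le k$. *)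

(* Defs.v *)
From mathcomp Require Import all_boot all_algebra.
From mathcomp Require Import complex reals boolp.
Set Implicit Arguments.
Unset Strict Implicit.
Unset Printing Implicit Defensive.
Import GRing.Theory Num.Theory.
Local Open Scope ring_scope.

Section GenFrac.
Variable K : fieldType.

(* A Laurent series in (X - a) is given by its coefficient function
   n |-> f_{a,n}; it is a genuine Laurent series when only finitely many
   coefficients of negative index are nonzero. *)
Definition laurent := int -> K.

Definition is_laurent (c : laurent) : Prop :=
  exists N : int, forall n : int, n < N -> c n = 0.

(* A valid lower bound for the support (chosen classically; 0 if c is not
   a Laurent series -- junk value). *)
Definition lbound (c : laurent) : int :=
  match pselect (is_laurent c) with
  | left h => sval (cid h)
  | right _ => 0
  end.

Definition mulL (c d : laurent) : laurent := fun n =>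
  let N1 := lbound c in let N2 := lbound d in
  if (N1 + N2 <= n)%R then
    \sum_(i < (absz (n - N1 - N2)%R).+1) c (N1 + i%:Z) * d (n - N1 - i%:Z)
  else 0.

Definition addL (c d : laurent) : laurent := fun n => c n + d n.

Definition oneL : laurent := fun n => (n == 0)%:R.

Definition invL (c : laurent) : laurent :=
  match pselect (exists d, is_laurent d /\ mulL c d = oneL) with
  | left h => sval (cid h)
  | right _ => fun _ => 0
  end.

Definition genfrac := K -> laurent.

Definition is_genfrac (f : genfrac) : Prop := forall a, is_laurent (f a).

Definition is_genpoly (f : genfrac) : Prop :=
  forall a (n : int), n < 0 -> f a n = 0.

Definition addGF (f g : genfrac) : genfrac := fun a => addL (f a) (g a).
Definition mulGF (f g : genfrac) : genfrac := fun a => mulL (f a) (g a).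

(* Taylor expansion of a polynomial P at a: coefficient of (X-a)^n is
   P^(n)(a)/n!, i.e. (P^`N(n)).[a]. *)
Definition taylor (a : K) (P : {poly K}) : laurent := fun n =>
  match n with
  | Posz m => (P^`N(m)).[a]
  | Negz _ => 0
  end.

Definition polyGF (P : {poly K}) : genfrac := fun a => taylor a P.

Definition divGF (f : genfrac) (D : {poly K}) : genfrac :=
  fun a => mulL (f a) (invL (taylor a D)).

(* J_a^k(f) for k >= 0, as a polynomial of degree <= k: the order-k
   expansion sum_{0 <= n <= k} f_{a,n} (X-a)^n.  (This is J_a^k(f) when f is
   defined at a, which is the only situation in which it is used.) *)
Definition Jpoly (a : K) (k : nat) (f : genfrac) : {poly K} :=
  \sum_(i < k.+1) f a (Posz i) *: ('X - a%:P) ^+ i.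

Definition TG_term (f : genfrac) (D : {poly K}) (a : K) : {poly K} :=
  let mu := mup a D in
  Jpoly a mu.-1 (divGF (mulGF f (polyGF (('X - a%:P) ^+ mu))) D)
  * (D %/ ('X - a%:P) ^+ mu).

End GenFrac.

(* Main.v *)
Require Import Defs.
From mathcomp Require Import all_boot all_algebra.
From mathcomp Require Import complex reals boolp.
From mathcomp Require Import zify.
Set Implicit Arguments.
Unset Strict Implicit.
Unset Printing Implicit Defensive.
Import GRing.Theory Num.Theory.
Local Open Scope ring_scope.

Section Laurent.
Variable K : fieldType.
Implicit Types c d e : laurent K.

Definition valid c (N : int) := forall n : int, n < N -> c n = 0.

Lemma lbound_valid c : is_laurent c -> valid c (lbound c).
Proof. rewrite /lbound => h; case: pselect => // h'. by case: (cid h'). Qed.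

Definition pwin c (N : int) (m : nat) : {poly K} := \poly_(i < m.+1) c (N + i%:Z).

Lemma coefM_eq k (A B A' B' : {poly K}) :
  (forall i, (i <= k)%N -> A`_i = A'`_i) -> (forall i, (i <= k)%N -> B`_i = B'`_i) ->
  (A * B)`_k = (A' * B')`_k.
Proof.
move=> hA hB; rewrite !coefM; apply: eq_bigr => i _.
have hi : (i <= k)%N by rewrite -ltnS.
by rewrite hA ?hB // leq_subr.
Qed.

Definition mval c d (N1 N2 : int) (m : nat) (n : int) : K :=
  if N1 + N2 <= n then (pwin c N1 m * pwin d N2 m)`_(absz (n - N1 - N2)%R) else 0.

Lemma mulL_lb c d n : mulL c d n =
  mval c d (lbound c) (lbound d) (absz (n - lbound c - lbound d)%R) n.
Proof.
rewrite /mulL /mval; case: ifP => // hn; rewrite coefM; apply: eq_bigr => i _.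
have hi : (i <= absz (n - lbound c - lbound d)%R)%N by rewrite -ltnS.
rewrite !coef_poly ltnS hi ltnS leq_subr; congr (_ * d _); lia.
Qed.

Lemma mval_m c d N1 N2 m m' n : (absz (n - N1 - N2)%R <= m)%N ->
  (absz (n - N1 - N2)%R <= m')%N ->
  mval c d N1 N2 m n = mval c d N1 N2 m' n.
Proof.
move=> h h'; rewrite /mval; case: ifP => // _; apply: coefM_eq => i hi;
by rewrite !coef_poly !ltnS (leq_trans hi h) (leq_trans hi h').
Qed.

Lemma pwin_shift c N M m i : valid c N -> M <= N -> (i <= m)%N ->
  (pwin c M m)`_i = ('X^(absz (N - M)%R) * pwin c N m)`_i.
Proof.
move=> vc hMN hi; rewrite coefXnM !coef_poly ltnS hi.
case: ltnP => hia; first by apply: vc; lia.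
rewrite ltnS (leq_trans (leq_subr _ _) hi); congr c; lia.
Qed.

Lemma mval_shift c d N1 N2 M1 M2 m n : valid c N1 -> valid d N2 ->
  M1 <= N1 -> M2 <= N2 -> (absz (n - M1 - M2)%R <= m)%N ->
  mval c d M1 M2 m n = mval c d N1 N2 m n.
Proof.
move=> vc vd h1 h2 hm; rewrite /mval.
case: ifP => hM; last first.
  by case: ifP => // hN; exfalso; move/negbT: hM; lia.
rewrite (@coefM_eq _ _ _ ('X^(absz (N1 - M1)%R) * pwin c N1 m)
   ('X^(absz (N2 - M2)%R) * pwin d N2 m)); first last.
- by move=> i hi; apply: pwin_shift => //; apply: leq_trans hi hm.
- by move=> i hi; apply: pwin_shift => //; apply: leq_trans hi hm.
rewrite mulrACA -exprD coefXnM.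
case: ltnP => hk; case: ifP => hN //.
- exfalso; lia.
- congr nth; lia.
- exfalso; move/negbT: hN; lia.
Qed.

Lemma mulLE c d N1 N2 m n : valid c N1 -> valid d N2 ->
  (absz (n - N1 - N2)%R <= m)%N -> mulL c d n = mval c d N1 N2 m n.
Proof.
move=> vc vd hm.
have Lc : is_laurent c by exists N1.
have Ld : is_laurent d by exists N2.
have vL1 := lbound_valid Lc; have vL2 := lbound_valid Ld.
set L1 := lbound c in vL1 *; set L2 := lbound d in vL2 *.
pose M1 := N1 - (absz (N1 - L1)%R)%:Z; pose M2 := N2 - (absz (N2 - L2)%R)%:Z.
pose m' := (m + absz (n - M1 - M2)%R + absz (n - L1 - L2)%R)%N.
rewrite mulL_lb -/L1 -/L2 (@mval_m _ _ _ _ _ m'); [|done|lia].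
rewrite -(@mval_shift _ _ L1 L2 M1 M2) //; try lia.
rewrite (@mval_shift _ _ N1 N2 M1 M2) //; try lia.
by apply: mval_m; lia.
Qed.

Lemma mulL_valid c d N1 N2 : valid c N1 -> valid d N2 -> valid (mulL c d) (N1 + N2).
Proof.
move=> vc vd n hn; rewrite (@mulLE _ _ N1 N2 (absz (n - N1 - N2)%R)) // /mval.
by case: ifP => //; lia.
Qed.

Lemma mulL_laurent c d : is_laurent c -> is_laurent d -> is_laurent (mulL c d).
Proof. by case=> N1 v1 [N2 v2]; exists (N1 + N2); apply: mulL_valid. Qed.

Lemma mulLC c d : is_laurent c -> is_laurent d -> mulL c d = mulL d c.
Proof.
case=> N1 v1 [N2 v2]; apply: funext => n.
rewrite (@mulLE _ _ N1 N2 (absz (n - N1 - N2)%R)) //.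
rewrite (@mulLE _ _ N2 N1 (absz (n - N1 - N2)%R)) //; last by lia.
rewrite /mval.
by rewrite (addrC N2) (addrAC n) mulrC.
Qed.

Lemma pwin_mul c d N1 N2 k i : valid c N1 -> valid d N2 -> (i <= k)%N ->
  (pwin (mulL c d) (N1 + N2) k)`_i = (pwin c N1 k * pwin d N2 k)`_i.
Proof.
move=> v1 v2 hi; rewrite coef_poly ltnS hi.
rewrite (@mulLE _ _ N1 N2 k) //; last by lia.
rewrite /mval ifT; last by lia.
congr nth; lia.
Qed.

Lemma mulLA c d e : is_laurent c -> is_laurent d -> is_laurent e ->
  mulL (mulL c d) e = mulL c (mulL d e).
Proof.
case=> N1 v1 [N2 v2] [N3 v3]; apply: funext => n.
set k := absz (n - N1 - N2 - N3)%R.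
rewrite (@mulLE _ _ (N1 + N2) N3 k) ?mulL_valid //; last by lia.
rewrite (@mulLE _ _ N1 (N2 + N3) k) ?mulL_valid //; last by lia.
rewrite /mval addrA; case: ifP => // hn.
rewrite (@coefM_eq _ _ _ (pwin c N1 k * pwin d N2 k) (pwin e N3 k)); first last.
- by [].
- by move=> i hi; apply: pwin_mul => //; lia.
rewrite [RHS](@coefM_eq _ _ _ (pwin c N1 k) (pwin d N2 k * pwin e N3 k)); first last.
- by move=> i hi; apply: pwin_mul => //; lia.
- by [].
rewrite mulrA; congr nth; try lia.
all: by apply: mulL_valid.
Qed.

Lemma oneL_valid : valid (oneL K) 0.
Proof. by move=> n hn; rewrite /oneL; have -> : (n == 0) = false by lia. Qed.

Lemma mulL1 c : is_laurent c -> mulL c (oneL K) = c.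
Proof.
case=> N v; apply: funext => n.
rewrite (@mulLE _ _ N 0 (absz (n - N - 0)%R)) //; last exact: oneL_valid.
rewrite /mval addr0; case: ifP => hn; last by rewrite v //; lia.
rewrite (@coefM_eq _ _ _ (pwin c N (absz (n - N - 0)%R)) 1) //; last first.
  move=> i hi; rewrite coef_poly ltnS hi coef1 /oneL add0r.
  by case: i hi.
rewrite mulr1 coef_poly ltnS leqnn; congr c; lia.
Qed.

Lemma mulL_ps c d (k : nat) (A B : {poly K}) : valid c 0 -> valid d 0 ->
  (forall i, (i <= k)%N -> A`_i = c i) -> (forall i, (i <= k)%N -> B`_i = d i) ->
  mulL c d k = (A * B)`_k.
Proof.
move=> v1 v2 hA hB; rewrite (@mulLE _ _ 0 0 k) //; last by lia.
rewrite /mval (_ : (0 + 0 <= k%:Z) = true); last by apply/idP; lia.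
rewrite !subr0 absz_nat.
apply: coefM_eq => i hi; rewrite coef_poly ltnS hi add0r.
- by rewrite hA.
- by rewrite hB.
Qed.

Lemma lowest u c (k0 : nat) : valid u k0 -> u k0 != 0 -> is_laurent c ->
  valid (mulL u c) k0 -> valid c 0.
Proof.
move=> vu u0 [N vc] vuc.
have P : forall j : nat, forall n : int, n < 0 -> n < N + j%:Z -> c n = 0.
  elim=> [|j IH] n hn hnj; first by apply: vc; lia.
  have [hlt|hge] := boolP (n < N + j%:Z); first exact: IH.
  have en : n = N + j%:Z by lia.
  have h0 : mulL u c (k0%:Z + n) = 0 by apply: vuc; lia.
  move: h0.
  rewrite (@mulLE _ _ k0 N j) //; last by lia.
  rewrite /mval ifT; last by lia.
  have -> : absz (k0%:Z + n - k0%:Z - N)%R = j by lia.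
  rewrite coefMr big_ord_recr /= big1; last first.
    move=> i _; rewrite [X in _ * X]coef_poly /=.
    have hi : (i < j)%N := ltn_ord i.
    rewrite ltnS ltnW // IH ?mulr0 //; lia.
  rewrite add0r subnn !coef_poly /= ltnS leqnn addr0 => /eqP.
  by rewrite mulf_eq0 (negbTE u0) /= -en => /eqP.
move=> n hn; apply: (P (absz (n - N)%R).+1) => //; lia.
Qed.

Fixpoint invT (E : {poly K}) (n : nat) : {poly K} :=
  match n with
  | 0 => (E`_0)^-1%:P
  | p.+1 => invT E p - ((E * invT E p)`_p.+1 / E`_0) *: 'X^(p.+1)
  end.

Lemma invT_spec (E : {poly K}) n i : E`_0 != 0 -> (i <= n)%N -> (E * invT E n)`_i = (i == 0)%:R.
Proof.
move=> E0; elim: n i => [|n IH] i hi /=.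
  by move: hi; rewrite leqn0 => /eqP ->; rewrite coefMC mulfV.
rewrite mulrBr coefB -scalerAr coefZ coefMXn.
rewrite leq_eqVlt in hi; case/orP: hi => [/eqP ->|hi].
  by rewrite ltnn subnn divfK // subrr.
by rewrite hi mulr0 subr0 IH // -ltnS.
Qed.

Lemma invT_stable (E : {poly K}) n (d : nat) i : (i <= n)%N -> (invT E (n + d))`_i = (invT E n)`_i.
Proof.
move=> hi; elim: d => [|d IH]; first by rewrite addn0.
rewrite addnS /= coefB coefZ coefXn IH.
have -> : (i == (n + d).+1) = false by apply/negbTE; lia.
by rewrite mulr0 subr0.
Qed.

Lemma laurent_inv u (mu : nat) (E : {poly K}) : E`_0 != 0 -> valid u 0 ->
  (forall j : nat, u j = ('X^mu * E)`_j) ->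
  exists d, is_laurent d /\ mulL u d = oneL K.
Proof.
move=> E0 vu hu.
pose e (j : nat) := (invT E j)`_j.
pose d (n : int) := if - (mu%:Z) <= n then e (absz (n + mu%:Z)%R) else 0.
have vd : valid d (- (mu%:Z)) by move=> n hn; rewrite /d ifF //; lia.
exists d; split; first by exists (- (mu%:Z)).
apply: funext => n; set m := absz (n - 0 - - (mu%:Z))%R.
rewrite (@mulLE _ _ 0 (- (mu%:Z)) m) // /mval add0r.
case: ifP => hn; last by rewrite /oneL; have -> : (n == 0) = false by lia.
rewrite (@coefM_eq _ _ _ ('X^mu * E) (invT E m)); first last.
- move=> i hi; rewrite coef_poly ltnS hi /d ifT; last by lia.
  have -> : absz (- (mu%:Z) + i%:Z + mu%:Z)%R = i by lia.
  by rewrite /e -(@invT_stable E i (m - i)) // subnKC.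
- by move=> i hi; rewrite coef_poly ltnS hi add0r hu.
rewrite -mulrA coefXnM /oneL.
case: ltnP => hm; first by have -> : (n == 0) = false by lia.
rewrite invT_spec // ?leq_subr //.
by case: (eqVneq n 0) => [hn0|hn0]; [have -> : (m - mu = 0)%N by lia |
   have -> : (m - mu == 0)%N = false by lia]; rewrite ?eqxx ?hn0 ?eqxx //; rewrite ?(negbTE hn0).
Qed.

Lemma invL_spec c : (exists d, is_laurent d /\ mulL c d = oneL K) ->
  is_laurent (invL c) /\ mulL c (invL c) = oneL K.
Proof. by move=> h; rewrite /invL; case: pselect => // h'; case: (cid h'). Qed.

End Laurent.

Section Taylor.
Variable K : fieldType.

Implicit Types (a : K) (P Q : {poly K}).
Definition tp a P := P \Po ('X + a%:P).

Lemma sum_ord_delta n (F : nat -> K) (m : nat) :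
  \sum_(i < n) F i * (m == i :> nat)%:R = if (m < n)%N then F m else 0.
Proof.
case: ltnP => h.
  rewrite (bigD1 (Ordinal h)) //=.
  rewrite eqxx mulr1 big1 ?addr0 // => i hi.
  have -> : (m == i :> nat) = false; last by rewrite mulr0.
  by apply/negbTE; apply: contra hi => /eqP hm; apply/eqP/val_inj.
rewrite big1 // => i _; have -> : (m == i :> nat) = false; last by rewrite mulr0.
by apply/negbTE; have := ltn_ord i; lia.
Qed.

Lemma taylor_tp a P (m : nat) : taylor a P m = (tp a P)`_m.
Proof.
rewrite /taylor /tp.
have := nderiv_taylor (P^:P) (commr_polyX (a%:P)).
rewrite /comp_poly (addrC 'X) => ->; rewrite coef_sum.
under eq_bigr => i _ do rewrite nderivn_map horner_map coefCM coefXn.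
rewrite (@sum_ord_delta _ (fun i => (P^`N(i)).[a])); case: ltnP => // h.
by rewrite nderivn_poly0 ?horner0 // -(size_map_polyC P).
Qed.

Lemma taylor_valid a P : valid (taylor a P) 0.
Proof. by case=> // m; lia. Qed.

Lemma taylor_laurent a P : is_laurent (taylor a P).
Proof. by exists 0; apply: taylor_valid. Qed.

Lemma taylorM a P Q : taylor a (P * Q) = mulL (taylor a P) (taylor a Q).
Proof.
apply: funext => -[m|m].
  rewrite (@mulL_ps _ _ _ m (tp a P) (tp a Q)); try exact: taylor_valid;
    try by move=> i _; rewrite taylor_tp.
  by rewrite taylor_tp /tp comp_polyM.
have hn : Negz m < 0 + 0 by [].
by rewrite (mulL_valid (taylor_valid a P) (taylor_valid a Q) hn).
Qed.

Lemma tp_XsubC_exp a k : tp a (('X - a%:P) ^+ k) = 'X^k.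
Proof.
elim: k => [|k IH]; first by rewrite !expr0 /tp -polyC1 comp_polyC.
rewrite !exprS -IH /tp comp_polyM.
by rewrite comp_polyB comp_polyX comp_polyC addrK.
Qed.

Lemma tp_K a P : (tp a P) \Po ('X - a%:P) = P.
Proof. exact: comp_polyXaddC_K. Qed.

Lemma tp_coef0 a P : (tp a P)`_0 = P.[a].
Proof.
by rewrite -horner_coef0 /tp horner_comp hornerD hornerX hornerC add0r.
Qed.

Lemma tp_B a P Q : tp a (P - Q) = tp a P - tp a Q.
Proof. exact: comp_polyB. Qed.

Lemma size_tp a P : size (tp a P) = size P.
Proof.
by rewrite /tp size_comp_poly2 // size_XaddC.
Qed.

End Taylor.

Section Main.
Variable K : closedFieldType.
Variable f : genfrac K.
Variable D : {poly K}.
Hypothesis hf : is_genpoly f.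
Hypothesis hD : D != 0.

Local Notation mu a := (mup a D).
Definition Ea (a : K) := D %/ ('X - a%:P) ^+ mu a.

Lemma Ea_eq a : Ea a * ('X - a%:P) ^+ mu a = D.
Proof. by rewrite divpK // -mup_geq. Qed.

Lemma Ea_neq0 a : Ea a != 0.
Proof. by apply: contraNneq hD => h; rewrite -(Ea_eq a) h mul0r. Qed.

Lemma Ea_root a : (Ea a).[a] != 0.
Proof.
apply/negP => /eqP h0; have : root (Ea a) a by apply/rootP.
rewrite -dvdp_XsubCl => /dvdpP [q hq].
have : ('X - a%:P) ^+ (mu a).+1 %| D.
  set m := mu a; rewrite -(Ea_eq a) -/m hq exprSr -mulrA (mulrC ('X - a%:P)) mulrA.
  by rewrite -mulrA dvdp_mulIr.
by rewrite -mup_geq // ltnn.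
Qed.

Lemma tpD a : tp a D = 'X^(mu a) * tp a (Ea a).
Proof.
have := tp_XsubC_exp a (mu a); rewrite /tp => hX.
by rewrite -{1}(Ea_eq a) comp_polyM hX mulrC.
Qed.

Lemma taylorD_valid a : valid (taylor a D) (mu a).
Proof.
case=> [m|m] hm; last exact: taylor_valid.
rewrite taylor_tp tpD coefXnM ifT //; lia.
Qed.

Lemma taylorD_mu a : taylor a D (mu a) != 0.
Proof. by rewrite taylor_tp tpD coefXnM ltnn subnn tp_coef0 Ea_root. Qed.

Lemma taylorD_inv a : is_laurent (invL (taylor a D)) /\
  mulL (taylor a D) (invL (taylor a D)) = oneL K.
Proof.
apply: invL_spec; apply: (@laurent_inv _ _ (mu a) (tp a (Ea a))).
- by rewrite tp_coef0 Ea_root.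
- exact: taylor_valid.
- by move=> j; rewrite taylor_tp tpD.
Qed.

Lemma oneL_laurent : is_laurent (oneL K).
Proof. by exists 0; apply: oneL_valid. Qed.

Lemma f_laurent a : is_laurent (f a).
Proof. by exists 0 => n hn; apply: hf. Qed.

Lemma cancelD a x : is_laurent x ->
  mulL (invL (taylor a D)) (mulL (taylor a D) x) = x.
Proof.
move=> Lx; have [Li Hi] := taylorD_inv a; have Lt := taylor_laurent a D.
rewrite -mulLA // (mulLC Li Lt) Hi mulLC //; first exact: mulL1.
exact: oneL_laurent.
Qed.

Lemma mulD_inv a x : is_laurent x ->
  mulL (taylor a D) (mulL x (invL (taylor a D))) = x.
Proof.
move=> Lx; have [Li Hi] := taylorD_inv a; have Lt := taylor_laurent a D.
rewrite (mulLC Lt (mulL_laurent Lx Li)) (mulLA Lx Li Lt) (mulLC Li Lt) Hi; exact: mulL1.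
Qed.

Definition hh a := divGF (mulGF f (polyGF (('X - a%:P) ^+ mu a))) D.

Lemma hh_E a : mulL (hh a a) (taylor a (Ea a)) = f a.
Proof.
rewrite /hh /divGF /mulGF /polyGF.
have [Li Hi] := taylorD_inv a.
have LF : is_laurent (f a) := f_laurent a.
have LX : is_laurent (taylor a (('X - a%:P) ^+ mu a)) := taylor_laurent _ _.
have LE : is_laurent (taylor a (Ea a)) := taylor_laurent _ _.
have tD : taylor a D = mulL (taylor a (('X - a%:P) ^+ mu a)) (taylor a (Ea a)).
  by rewrite -taylorM mulrC Ea_eq.
rewrite (mulLA (mulL_laurent LF LX) Li LE) (mulLC Li LE).
rewrite (mulLA LF LX (mulL_laurent LE Li)) -(mulLA LX LE Li) -tD Hi.
exact: mulL1.
Qed.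

Lemma hh_valid a : valid (hh a a) 0.
Proof.
apply: (@lowest _ (taylor a (Ea a)) _ 0).
- exact: taylor_valid.
- by rewrite taylor_tp tp_coef0 Ea_root.
- rewrite /hh /divGF; apply: mulL_laurent; last by case: (taylorD_inv a).
  apply: mulL_laurent; [exact: f_laurent | exact: taylor_laurent].
- rewrite mulLC ?hh_E; first by move=> n hn; apply: hf.
  + exact: taylor_laurent.
  + rewrite /hh /divGF; apply: mulL_laurent; last by case: (taylorD_inv a).
    apply: mulL_laurent; [exact: f_laurent | exact: taylor_laurent].
Qed.

Lemma tp_sum I (r : seq I) (F : I -> {poly K}) a :
  tp a (\sum_(i <- r) F i) = \sum_(i <- r) tp a (F i).
Proof.
apply: (big_morph (tp a)); first by move=> x y; rewrite /tp comp_polyD.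
by rewrite /tp comp_poly0.
Qed.

Lemma tp_Jpoly a k (g : genfrac K) j : (j <= k)%N ->
  (tp a (Jpoly a k g))`_j = g a j.
Proof.
move=> hj; rewrite /Jpoly tp_sum coef_sum.
under eq_bigr => i _ do rewrite /tp comp_polyZ -/(tp a _) tp_XsubC_exp coefZ coefXn.
by rewrite (@sum_ord_delta _ _ (fun n : nat => g a n)) ltnS hj.
Qed.

Lemma size_Jpoly a k (g : genfrac K) : (size (Jpoly a k g) <= k.+1)%N.
Proof.
rewrite -(size_tp a) /Jpoly tp_sum.
under eq_bigr => i _ do rewrite /tp comp_polyZ -/(tp a _) tp_XsubC_exp.
by rewrite -(@poly_def _ _ (fun n : nat => g a n)) size_poly.
Qed.

Lemma TG_own a j : (j < mu a)%N -> (tp a (TG_term f D a))`_j = f a j.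
Proof.
move=> hj; rewrite /TG_term -/(Ea a) /tp comp_polyM -!/(tp a _).
rewrite -(@mulL_ps _ (hh a a) (taylor a (Ea a)) j) ?hh_E //.
- exact: hh_valid.
- exact: taylor_valid.
- by move=> i hi; rewrite tp_Jpoly //; lia.
- by move=> i hi; rewrite taylor_tp.
Qed.

Lemma TG_other a b j : b != a -> (j < mu a)%N -> (tp a (TG_term f D b))`_j = 0.
Proof.
move=> hba hj.
have : ('X - a%:P) ^+ mu a %| Ea b.
  have cop : coprimep (('X - a%:P) ^+ mu a) (('X - b%:P) ^+ mu b).
    apply: coprimep_expl; apply: coprimep_expr.
    by rewrite coprimep_XsubC root_XsubC.
  by rewrite -(Gauss_dvdpl _ cop) Ea_eq -mup_geq.
case/dvdpP => Q hQ.
rewrite /TG_term -/(Ea b) hQ /tp !comp_polyM -!/(tp a _) tp_XsubC_exp.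
by rewrite mulrA coefMXn hj.
Qed.

Lemma root_of_mu a j : (j < mu a)%N -> root D a.
Proof. by move=> hj; rewrite -dvdp_XsubCl XsubC_dvd //; lia. Qed.

Lemma TG_sum (s : seq K) a j : uniq s -> (forall b, root D b -> b \in s) ->
  (j < mu a)%N -> (tp a (\sum_(b <- s) TG_term f D b))`_j = f a j.
Proof.
move=> us hs hj; have ain : a \in s by apply: hs; exact: root_of_mu hj.
rewrite tp_sum coef_sum (bigD1_seq a) //= TG_own //.
rewrite big1_seq ?addr0 // => b /andP [hb _].
by rewrite TG_other.
Qed.

Lemma size_TG_sum (s : seq K) : (forall b, b \in s -> root D b) ->
  (size (\sum_(b <- s) TG_term f D b)%R < size D)%N.
Proof.
move=> hs; have sD : (0 < size D)%N by rewrite size_poly_gt0.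
rewrite big_seq; apply: (big_ind (fun x : {poly K} => (size x < size D)%N)).
- by rewrite size_poly0.
- by move=> x y hx hy; apply: leq_ltn_trans (size_polyD x y) _; rewrite gtn_max hx hy.
move=> b /hs hb.
have mu0 : (0 < mu b)%N by rewrite -XsubC_dvd // dvdp_XsubCl.
have eS : size (Ea b * ('X - b%:P) ^+ mu b) = size D by rewrite Ea_eq.
rewrite size_mul ?Ea_neq0 ?expf_neq0 ?polyXsubC_eq0 // size_exp_XsubC in eS.
have sJ := size_Jpoly b (mu b).-1 (hh b).
rewrite /TG_term -/(Ea b); apply: leq_ltn_trans (size_polyMleq _ _) _.
move: sJ; rewrite -/(hh b).
move: eS; move: (size (Jpoly b (mu b).-1 (hh b))) (size (Ea b)) (mu b) mu0 => x y z hz eS sJ.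
move: (size (Jpoly b z.-1 (hh b))) sJ => x1 sJ.
lia.
Qed.

Lemma poly_uniq (P : {poly K}) : (size P < size D)%N ->
  (forall a j, (j < mu a)%N -> (tp a P)`_j = 0) -> P = 0.
Proof.
move=> hs hc.
have hdiv : forall a, ('X - a%:P) ^+ mu a %| P.
  move=> a.
  have ht : take_poly (mu a) (tp a P) = 0.
    apply/polyP => j; rewrite coef_take_poly coef0; case: ifP => // h; exact: hc.
  have e := poly_take_drop (mu a) (tp a P); rewrite ht add0r in e.
  by rewrite -(tp_K a P) -e comp_polyM comp_Xn_poly dvdp_mulIr.
have [rs ers] := closed_field_poly_normal D.
have c0 : lead_coef D != 0 by rewrite lead_coef_eq0.
have key : forall (rs' : seq K) (P' : {poly K}),
    (forall a, ('X - a%:P) ^+ (count_mem a rs') %| P') ->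
    \prod_(z <- rs') ('X - z%:P) %| P'.
  elim=> [|z rs' IH] P' h; first by rewrite big_nil dvd1p.
  have hz := h z; rewrite /= eqxx add1n exprS in hz.
  have : 'X - z%:P %| P' by apply: dvdp_trans hz; apply: dvdp_mulIl.
  case/dvdpP => Q eQ.
  rewrite big_cons eQ [Q * _]mulrC dvdp_mul2l ?polyXsubC_eq0 //.
  apply: IH => a; have ha := h a; rewrite eQ /= in ha.
  case: (eqVneq z a) => [ez|hza].
    rewrite -ez eqxx add1n exprS [Q * _]mulrC dvdp_mul2l ?polyXsubC_eq0 // in ha.
    by rewrite -ez.
  rewrite (negbTE hza) add0n Gauss_dvdpl // in ha.
  by apply: coprimep_expl; rewrite coprimep_XsubC root_XsubC.
have hPi : \prod_(z <- rs) ('X - z%:P) %| P.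
  apply: key => a; apply: dvdp_trans (hdiv a); apply: dvdp_exp2l.
  rewrite mup_geq // ers dvdpZr // -mup_geq ?mu_prod_XsubC //.
  by rewrite monic_neq0 // monic_prod_XsubC.
have hDP : D %| P by rewrite ers dvdpZl.
apply/eqP; apply: contraLR hs => hP; rewrite -leqNgt.
exact: dvdp_leq hP hDP.
Qed.

Theorem main_gen :
  exists (q : genfrac K) (Rm : {poly K}),
    [/\ is_genpoly q, (size Rm < size D)%N
      & f = addGF (mulGF (polyGF D) q) (polyGF Rm)] /\
    (forall (q' : genfrac K) (Rm' : {poly K}),
        is_genpoly q' -> (size Rm' < size D)%N ->
        f = addGF (mulGF (polyGF D) q') (polyGF Rm') ->
        q' = q /\ Rm' = Rm) /\
    (forall s : seq K, uniq s -> (forall a, (a \in s) = root D a) ->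
        Rm = \sum_(a <- s) TG_term f D a).
Proof.
have [rs ers] := closed_field_poly_normal D.
have c0 : lead_coef D != 0 by rewrite lead_coef_eq0.
pose s0 := undup rs.
have hs0 : forall a, (a \in s0) = root D a.
  by move=> a; rewrite mem_undup ers rootZ // root_prod_XsubC.
pose Rm := \sum_(b <- s0) TG_term f D b.
have KP : forall a j, (j < mu a)%N -> (tp a Rm)`_j = f a j.
  by move=> a j hj; apply: TG_sum => //; [exact: undup_uniq | move=> b; rewrite hs0].
have sRm : (size Rm < size D)%N by apply: size_TG_sum => b; rewrite hs0.
pose g a := fun n => f a n - taylor a Rm n.
have Lg : forall a, is_laurent (g a).
  by move=> a; exists 0 => n hn; rewrite /g hf // taylor_valid // subr0.
pose q := fun a => mulL (g a) (invL (taylor a D)).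
have eq_q : forall a, mulL (taylor a D) (q a) = g a by move=> a; exact: mulD_inv.
have Lq : forall a, is_laurent (q a).
  by move=> a; apply: mulL_laurent => //; case: (taylorD_inv a).
exists q, Rm; split; [split => // | split].
- move=> a n hn.
  apply: (@lowest _ (taylor a D) (q a) (mu a)) => //.
  + exact: taylorD_valid.
  + exact: taylorD_mu.
  + rewrite eq_q => -[j|j] hj; rewrite /g.
      by rewrite taylor_tp KP ?subrr //; lia.
    by rewrite hf // taylor_valid // subr0.
- apply: funext => a; apply: funext => n.
  by rewrite /addGF /addL /mulGF /polyGF eq_q /g subrK.
- move=> q' Rm' hq' hs' hf'.
  have hcoef : forall a n, f a n = mulL (taylor a D) (q' a) n + taylor a Rm' n.
    by move=> a n; rewrite {1}hf'.
  have eR : Rm' = Rm.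
    apply/eqP; rewrite -subr_eq0; apply/eqP; apply: poly_uniq.
      by rewrite (leq_ltn_trans (size_polyD _ _)) // size_polyN gtn_max hs' sRm.
    move=> a j hj; rewrite tp_B coefB KP // -taylor_tp.
    have := hcoef a j.
    have hv := mulL_valid (@taylorD_valid a) (hq' a : valid (q' a) 0).
    rewrite hv ?add0r; last by lia.
    by move=> ->; rewrite subrr.
  subst Rm'; split => //.
  apply: funext => a.
  have e1 : mulL (taylor a D) (q' a) = mulL (taylor a D) (q a).
    apply: funext => n; rewrite eq_q /g (hcoef a n) addrK //.
  have Lq' : is_laurent (q' a) by exists 0; exact: hq'.
  by rewrite -(cancelD a Lq') e1 cancelD.
- move=> s us hs.
  apply/eqP; rewrite eq_sym -subr_eq0; apply/eqP; apply: poly_uniq.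
    rewrite (leq_ltn_trans (size_polyD _ _)) // size_polyN gtn_max sRm andbT.
    by apply: size_TG_sum => b; rewrite hs.
  move=> a j hj; rewrite tp_B coefB TG_sum ?KP ?subrr //.
  by move=> b; rewrite hs.
Qed.

End Main.

Theorem mainTheorem1 (R : realType) (f : genfrac R[i]) (D : {poly R[i]}) :
  is_genpoly f -> (1 < size D)%N ->
  exists (q : genfrac R[i]) (Rm : {poly R[i]}),
    [/\ is_genpoly q, (size Rm < size D)%N
      & f = addGF (mulGF (polyGF D) q) (polyGF Rm)] /\
    (forall (q' : genfrac R[i]) (Rm' : {poly R[i]}),
        is_genpoly q' -> (size Rm' < size D)%N ->
        f = addGF (mulGF (polyGF D) q') (polyGF Rm') ->
        q' = q /\ Rm' = Rm) /\
    (forall s : seq R[i], uniq s -> (forall a, (a \in s) = root D a) ->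
        Rm = \sum_(a <- s) TG_term f D a).
Proof.
move=> hf hD; apply: (@main_gen R[i] f D hf).
by rewrite -size_poly_gt0; apply: ltn_trans hD.
Qed.
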